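(* The double Zarankiewicz number satisfies $z_2(m,2)=m+1$ for all $m\ge 2$, $z_2(2,n)=n+1$ for all $n\ge2$, $z_2(3,3)=6$, and $z_2(4,3)\ge 8> z(4,3)$.
   Context: The Zarankiewicz number $z(m,n)$ is the maximum number of edges of a bipartite graph with parts $[m]=\{1,\dots,m\}$ and $[n]$ containing no 4-cycle (equivalently, the maximum size of a set of cells of the $m\times n$ grid containing no four cells $(i,j),(i,l),(k,j),(k,l)$ with $i\ne k$, $j\ne l$). Double Zarankiewicz number: consider configurations $G=([m],[n],E_1\cup E_2)$ where $E_1\subseteq[m]\times[n]$ is a set of 1-edges (cells) and $E_2$ is a set of 2-edges $(i,j;k,l)$ with $i,k\in[m]$, $j,l\in[n]$, $i\ne k$, $j\ne l$; the cells $(i,j)$ and $(k,l)$ are the two halves of this 2-edge. Simplicity condition: the halves of all 2-edges are pairwise distinct cells and none of them belongs to $E_1$. A cell is occupied if it lies in $E_1$ or is a half of some 2-edge. $G$ contains a generalized $C_4$-cycle if (1) there are four 1-edges $(i,j),(i,l),(k,j),(k,l)\in E_1$ with $i\ne k$, $j\ne l$; or (2) there is a 2-edge $(i,j;k,l)\in E_2$ whose two opposite cells $(i,l)$ and $(k,j)$ are both occupied; or (3) there are a 2-edge $(i,j;p,q)\in E_2$ and a cell $(k,l)$ such that the five cells $(k,l),(k,j),(k,q),(i,l),(p,l)$ are pairwise distinct and all occupied. $z_2(m,n)$ is the maximum of $|E_1|+|E_2|$ over all such $G$ satisfying the simplicity condition and containing no generalized $C_4$-cycle. *)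

(* Defs.v *)
From mathcomp Require Import all_boot.
Set Implicit Arguments. Unset Strict Implicit. Unset Printing Implicit Defensive.

Definition cell (m n : nat) := ('I_m * 'I_n)%type.

(* A 2-edge (i,j;k,l) is represented as the ordered pair of its halves
   ((i,j),(k,l)).  *)
Definition twoedge (m n : nat) := (cell m n * cell m n)%type.

Section Defs.
Variables m n : nat.

Definition has_C4 (E1 : {set cell m n}) : bool :=
  [exists i : 'I_m, exists k : 'I_m, exists j : 'I_n, exists l : 'I_n,
    [&& i != k, j != l, (i, j) \in E1, (i, l) \in E1, (k, j) \in E1
      & (k, l) \in E1]].

Definition z : nat := \max_(E : {set cell m n} | ~~ has_C4 E) #|E|.

Definition wf_2edges (E2 : {set twoedge m n}) : bool :=
  [forall e in E2, (e.1.1 != e.2.1) && (e.1.2 != e.2.2)].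

Definition simple_conf (E1 : {set cell m n}) (E2 : {set twoedge m n}) : bool :=
  [forall e in E2, forall e' in E2, (e != e') ==>
      [&& e.1 != e'.1, e.1 != e'.2, e.2 != e'.1 & e.2 != e'.2]]
  && [forall e in E2, (e.1 \notin E1) && (e.2 \notin E1)].

Definition occupied (E1 : {set cell m n}) (E2 : {set twoedge m n}) (c : cell m n) : bool :=
  (c \in E1) || [exists e in E2, (e.1 == c) || (e.2 == c)].

(* Generalized C4-cycle, cases (1), (2), (3). *)
Definition has_gen_C4 (E1 : {set cell m n}) (E2 : {set twoedge m n}) : bool :=
  [|| has_C4 E1,
      [exists e in E2,
         occupied E1 E2 (e.1.1, e.2.2) && occupied E1 E2 (e.2.1, e.1.2)]
    | [exists e in E2, exists c : cell m n,
         let: ((i, j), (p, q)) := e in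
         let: (k, l) := c in
         let cs := [:: (k, l); (k, j); (k, q); (i, l); (p, l)] in
         uniq cs && all (occupied E1 E2) cs]].

Definition admissible (E1 : {set cell m n}) (E2 : {set twoedge m n}) : bool :=
  [&& wf_2edges E2, simple_conf E1 E2 & ~~ has_gen_C4 E1 E2].

Definition z2 : nat :=
  \max_(G : {set cell m n} * {set twoedge m n} | admissible G.1 G.2)
     (#|G.1| + #|G.2|).

End Defs.

(* Main.v *)
Require Import Defs.
From mathcomp Require Import all_boot zify.
Set Implicit Arguments. Unset Strict Implicit. Unset Printing Implicit Defensive.

Lemma cardsU_disj (T : finType) (A B : {set T}) :
  (forall x, x \in A -> x \in B -> False) -> #|A :|: B| = #|A| + #|B|.
Proof.
move=> H; rewrite -cardsUI.
suff -> : A :&: B = set0 by rewrite cards0 addn0.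
apply/setP => x; rewrite !inE; apply/negbTE/andP => -[/H Ha /Ha].
done.
Qed.

Section Gen.
Variables m n : nat.


Lemma simpleP (E1 : {set cell m n}) (E2 : {set twoedge m n}) : simple_conf E1 E2 ->
  (forall e e', e \in E2 -> e' \in E2 -> e != e' ->
     [&& e.1 != e'.1, e.1 != e'.2, e.2 != e'.1 & e.2 != e'.2]) /\
  (forall e, e \in E2 -> (e.1 \notin E1) && (e.2 \notin E1)).
Proof.
case/andP => /forall_inP H1 /forall_inP H2; split => //.
move=> e e' He He' Hne; exact: (implyP (forall_inP (H1 e He) e' He') Hne).
Qed.

Lemma occ_card (E1 : {set cell m n}) (E2 : {set twoedge m n}) : wf_2edges E2 -> simple_conf E1 E2 ->
  #|E1| + 2 * #|E2| <= #|[set c | occupied E1 E2 c]|.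
Proof.
move=> /forall_inP Hwf /simpleP [Hs1 Hs2].
set H1 := [set e.1 | e in E2]; set H2 := [set e.2 | e in E2].
have cH1 : #|H1| = #|E2|.
  apply: card_in_imset => e e' He He' Heq; apply/eqP; apply/negPn/negP => Hne.
  by move: (Hs1 e e' He He' Hne); rewrite Heq eqxx.
have cH2 : #|H2| = #|E2|.
  apply: card_in_imset => e e' He He' Heq; apply/eqP; apply/negPn/negP => Hne.
  by move: (Hs1 e e' He He' Hne); rewrite Heq eqxx !andbF.
have d12 : forall x, x \in H1 -> x \in H2 -> False.
  move=> x /imsetP [e He ->] /imsetP [e' He' Heq].
  have [Hee|Hne] := eqVneq e e'.
    by subst e'; move: (Hwf e He); rewrite Heq eqxx.
  by move: (Hs1 e e' He He' Hne); rewrite Heq eqxx /= andbF.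
have d01 : forall x, x \in E1 -> x \in H1 :|: H2 -> False.
  move=> x Hx; rewrite inE => /orP [] /imsetP [e He Heq]; move: (Hs2 e He);
    by rewrite -Heq Hx ?andbF.
rewrite mul2n -addnn -{1}cH1 -{1}cH2 -cardsU_disj //.
rewrite -cardsU_disj; last by move=> x Hx; apply: d01.
apply: subset_leq_card; apply/subsetP => x; rewrite !inE /occupied.
case/orP => [-> //|/orP [] /imsetP [e He ->]]; apply/orP; right;
  apply/existsP; exists e; by rewrite He eqxx ?orbT.
Qed.
End Gen.

Definition c0 : 'I_2 := ord0.
Definition c1 : 'I_2 := ord_max.

Lemma ord2 (j : 'I_2) : j = c0 \/ j = c1.
Proof. case: j => [[|[|k]]] Hk; [left|right|]; try exact: val_inj. by []. Qed.

Lemma z2_m2_le m : z2 m 2 <= m + 1.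
Proof.
apply/bigmax_leqP => [[E1 E2]] /= /and3P [Hwf Hs Hg].
have HO := occ_card Hwf Hs.
set O := [set c | occupied E1 E2 c] in HO.
have inO : forall c, (c \in O) = occupied E1 E2 c by move=> c; rewrite inE.
clearbody O.
set R := [set r : 'I_m | ((r,c0) \in O) && ((r,c1) \in O)].
have inR : forall r, (r \in R) = ((r,c0) \in O) && ((r,c1) \in O) by move=> r; rewrite inE.
clearbody R.
have RO : forall r j, r \in R -> (r, j) \in O.
  by move=> r j; rewrite inR => /andP [H0 H1]; case: (ord2 j) => ->.
have OR : forall r j j', (r, j) \in O -> (r, j') \in O -> j != j' -> r \in R.
  move=> r j j'; rewrite inR.
  by case: (ord2 j) => ->; case: (ord2 j') => -> // => -> ->.
set X1 := [set c : cell m 2 | (c.2 == c1) && (c.1 \in R)].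
have inX1 : forall c, (c \in X1) = (c.2 == c1) && (c.1 \in R) by move=> c; rewrite inE.
set X2 := [set c in O | (c.2 == c0) || (c.1 \notin R)].
have inX2 : forall c, (c \in X2) = (c \in O) && ((c.2 == c0) || (c.1 \notin R)) by move=> c; rewrite inE.
clearbody X1 X2.
have OX : #|O| <= #|X1| + #|X2|.
  rewrite -cardsUI; apply: leq_trans (leq_addr _ _).
  apply: subset_leq_card; apply/subsetP => -[r j] Hc; rewrite !inE inX1 inX2 /= Hc /=.
  case: (ord2 j) => ->; first by rewrite eqxx orbT.
  by rewrite eqxx /=; case: (r \in R); rewrite ?orbT.
have X1R : #|X1| <= #|R|.
  apply: leq_trans (leq_imset_card (fun r => (r, c1)) R).
  apply: subset_leq_card; apply/subsetP => -[r j]; rewrite inX1 /= => /andP [/eqP -> Hr].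
  by apply/imsetP; exists r.
have X2m : #|X2| <= m.
  rewrite -(card_in_imset (f := fst)); first by apply: leq_trans (max_card _) _; rewrite card_ord.
  move=> [r j] [r' j']; rewrite !inX2 /= => /andP [Hj Cj] /andP [Hj' Cj'] Hrr; subst r'.
  case: (eqVneq j j') => [-> //|Hne]; exfalso.
  have HR := OR _ _ _ Hj Hj' Hne.
  move: Cj Cj'; rewrite HR /= !orbF => /eqP Ej /eqP Ej'.
  by move: Hne; rewrite Ej Ej' eqxx.
set R1 := [set r : 'I_m | ((r,c0) \in E1) && ((r,c1) \in E1)].
have inR1 : forall r, (r \in R1) = ((r,c0) \in E1) && ((r,c1) \in E1) by move=> r; rewrite inE.
clearbody R1.
have R1le : #|R :&: R1| <= 1.
  apply: leq_trans (subset_leq_card (subsetIr R R1)) _.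
  apply/card_le1_eqP => r k; rewrite !inR1 => /andP [Hr0 Hr1] /andP [Hk0 Hk1].
  apply/eqP; apply/negPn/negP => Hrk.
  move: Hg; rewrite /has_gen_C4 => /norP [/negP Hc _]; apply: Hc.
  apply/existsP; exists k; apply/existsP; exists r; apply/existsP; exists c0;
  apply/existsP; exists c1; by rewrite Hrk Hr0 Hr1 Hk0 Hk1.
have noFull : forall e, e \in E2 -> e.1.1 \in R -> e.2.1 \in R -> False.
  move=> e He H1 H2; move: Hg; rewrite /has_gen_C4 => /norP [_ /norP [/negP Hc _]].
  apply: Hc; apply/existsP; exists e; rewrite He -!inO.
  by rewrite (RO _ _ H1) (RO _ _ H2).
have touch : forall r, r \in R :\: R1 ->
    exists2 e, e \in E2 & (e.1.1 == r) || (e.2.1 == r).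
  move=> r; rewrite inE inR1 => /andP [Hn HR].
  have [j Hj Hnj] : exists2 j, (r, j) \in O & (r, j) \notin E1.
    move: Hn; case: (boolP ((r, c0) \in E1)) => H0 /=.
      by move=> H1; exists c1 => //; apply: RO.
    by move=> _; exists c0 => //; apply: RO.
  move: Hj; rewrite inO /occupied (negbTE Hnj) /= => /existsP [e /andP [He Ht]].
  exists e => //; case/orP: Ht => /eqP -> ; by rewrite eqxx ?orbT.
pose f r := odflt ((r, c0), (r, c0)) [pick e in E2 | (e.1.1 == r) || (e.2.1 == r)].
have fP : forall r, r \in R :\: R1 -> (f r \in E2) && (((f r).1.1 == r) || ((f r).2.1 == r)).
  move=> r Hr; rewrite /f; case: pickP => [e /andP [-> ->] //|Hn].
  by case: (touch r Hr) => e He Ht; move: (Hn e); rewrite He Ht.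
have R2le : #|R :\: R1| <= #|E2|.
  rewrite -(card_in_imset (f := f)).
    apply: subset_leq_card; apply/subsetP => e /imsetP [r Hr ->].
    by case/andP: (fP r Hr).
  move=> r r' Hr Hr' Hf.
  have HrR : r \in R by move: Hr; rewrite inE => /andP [].
  have HrR' : r' \in R by move: Hr'; rewrite inE => /andP [].
  case/andP: (fP r Hr) => He Ht; case/andP: (fP r' Hr') => _; rewrite -Hf => Ht'.
  have key : forall a b : 'I_m, (a == r) || (b == r) -> (a == r') || (b == r') ->
      r != r' -> (a \in R) && (b \in R).
    move=> a b H1 H2 Hne; apply/andP; split.
      case/orP: H1 => [/eqP -> //|/eqP Eb]; case/orP: H2 => [/eqP -> //|/eqP Eb'].
      by move: Hne; rewrite -Eb -Eb' eqxx.
    case/orP: H1 => [/eqP Eb|/eqP -> //]; case/orP: H2 => [/eqP Eb'|/eqP -> //].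
    by move: Hne; rewrite -Eb -Eb' eqxx.
  apply/eqP; apply/negPn/negP => Hne.
  by case/andP: (key _ _ Ht Ht' Hne); apply: noFull.
have RR1 : #|R| <= 1 + #|E2| by rewrite -(cardsID R1 R); apply: leq_add.
move: HO OX X1R X2m RR1; move: #|E1| #|E2| #|O| #|X1| #|X2| #|R| => a b c d e g; lia.
Qed.

Lemma adm_E1only m n (E1 : {set cell m n}) : ~~ has_C4 E1 -> admissible E1 set0.
Proof.
move=> H; apply/and3P; split.
- by apply/forall_inP => e; rewrite inE.
- by apply/andP; split; apply/forall_inP => e; rewrite inE.
- rewrite /has_gen_C4 (negbTE H) /=; apply/norP; split; apply/negP => /existsP [e];
  by rewrite inE.
Qed.

Lemma z2_ge_z m n (E1 : {set cell m n}) : ~~ has_C4 E1 -> #|E1| <= z2 m n.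
Proof.
move=> H; have := leq_bigmax_cond (F := fun G : {set cell m n} * {set twoedge m n} => #|G.1| + #|G.2|)
   (P := fun G => admissible G.1 G.2) (E1, set0) (adm_E1only H).
by rewrite /= cards0 addn0.
Qed.

Lemma z2_m2_ge m : 0 < m -> m + 1 <= z2 m 2.
Proof.
move=> Hm; pose r0 : 'I_m := Ordinal Hm.
pose E1 : {set cell m 2} := [set (r, c0) | r : 'I_m] :|: [set (r0, c1)].
have inE1 : forall c, (c \in E1) = (c.2 == c0) || (c == (r0, c1)).
  move=> [r j]; rewrite !inE /=; congr orb; apply/imsetP/eqP => [[r' _ [_ ->]] //|->].
  by exists r.
have cE1 : #|E1| = m + 1.
  rewrite cardsU_disj ?cards1.
    by rewrite card_imset ?card_ord // => r r' [].
  by move=> x /imsetP [r _ ->]; rewrite inE => /eqP [].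
rewrite -cE1; apply: z2_ge_z; apply/negP => /existsP [i] /existsP [k] /existsP [j] /existsP [l].
rewrite !inE1 /= => /and3P [Hik Hjl /and4P [H1 H2 H3 H4]].
move: Hik Hjl H1 H2 H3 H4; case: (ord2 j) => ->; case: (ord2 l) => -> //=.
all: rewrite ?xpair_eqE ?eqxx ?andbT ?orbF /=.
all: move=> Hik *; move: Hik;
  repeat match goal with H : is_true (_ == _) |- _ => move/eqP: H => H; subst end;
  by rewrite eqxx.
Qed.

Definition tc {m n} (c : cell m n) : cell n m := (c.2, c.1).
Definition te {m n} (e : twoedge m n) : twoedge n m := (tc e.1, tc e.2).
Lemma tcK m n : cancel (@tc m n) (@tc n m). Proof. by case. Qed.
Lemma teK m n : cancel (@te m n) (@te n m). Proof. by case=> [[a b] [c d]]. Qed.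
Lemma tc_inj m n : injective (@tc m n). Proof. exact: can_inj (@tcK m n). Qed.
Lemma te_inj m n : injective (@te m n). Proof. exact: can_inj (@teK m n). Qed.

Section T.
Variables m n : nat.
Variables (E1 : {set cell m n}) (E2 : {set twoedge m n}).
Let F1 : {set cell n m} := tc @: E1.
Let F2 : {set twoedge n m} := te @: E2.

Lemma inF1 c : (c \in F1) = (tc c \in E1).
Proof. by rewrite -{1}(tcK c) mem_imset //; apply: tc_inj. Qed.
Lemma inF2 e : (e \in F2) = (te e \in E2).
Proof. by rewrite -{1}(teK e) mem_imset //; apply: te_inj. Qed.

Lemma occF c : occupied F1 F2 c = occupied E1 E2 (tc c).
Proof.
rewrite /occupied inF1; congr orb; apply/existsP/existsP => -[e].
  rewrite inF2 => /andP [He Ht]; exists (te e); rewrite He /=.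
  by rewrite /te /= !(inj_eq (@tc_inj _ _)).
move=> /andP [He Ht]; exists (te e); rewrite inF2 teK He /=.
by rewrite -(inj_eq (@tc_inj _ _)) -[X in _ || X](inj_eq (@tc_inj _ _)) /= !tcK.
Qed.

Lemma adm_transpose : admissible E1 E2 -> admissible F1 F2.
Proof.
case/and3P => /forall_inP Hwf /simpleP [Hs1 Hs2] Hg; apply/and3P; split.
- apply/forall_inP => e; rewrite inF2 => /Hwf; case: e => [[a b] [c d]] /=.
  by rewrite andbC.
- apply/andP; split; apply/forall_inP => e; rewrite inF2.
    move=> He; apply/forall_inP => e'; rewrite inF2 => He'; apply/implyP => Hne.
    have := Hs1 _ _ He He'; rewrite (inj_eq (@te_inj _ _)) => /(_ Hne).
    by case: e e' {He He' Hne} => [[a b] [c d]] [[a' b'] [c' d']];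
      rewrite /te /= !(inj_eq (@tc_inj _ _)).
  by move=> /Hs2; rewrite !inF1.
- apply: contra Hg; case/or3P => [/existsP [i] /existsP [k] /existsP [j] /existsP [l]|
      /existsP [e] /andP [He Ho] | /existsP [e] /andP [He /existsP [c Hc]]].
  + rewrite !inF1 /= => /and3P [H1 H2 /and4P [H3 H4 H5 H6]]; apply/orP; left.
    apply/existsP; exists j; apply/existsP; exists l; apply/existsP; exists i;
    apply/existsP; exists k; by rewrite H1 H2 H3 H4 H5 H6.
  + apply/orP; right; apply/orP; left; apply/existsP; exists (te e).
    rewrite -inF2 He /=; move: Ho; rewrite !occF.
    by case: e {He} => [[a b] [c d]] /=; rewrite andbC.
  + apply/orP; right; apply/orP; right; apply/existsP; exists (te e).
    rewrite -inF2 He /=; apply/existsP; exists (tc c).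
    move: Hc; case: e {He} => [[a b] [c0 d]]; case: c => [k l] Hc.
    have key : forall (L : seq (cell n m)) (L' : seq (cell m n)),
        perm_eq (map tc L) L' -> uniq L && all (occupied F1 F2) L ->
        uniq L' && all (occupied E1 E2) L'.
      move=> L L' HP /andP [Hu Ha].
      rewrite -(perm_uniq HP) -(perm_all _ HP) (map_inj_uniq (@tc_inj _ _)) Hu /=.
      by rewrite all_map; apply: sub_all Ha => x /=; rewrite occF.
    apply: (key [:: (k, l); (k, b); (k, d); (a, l); (c0, l)] [:: (l, k); (l, a); (l, c0); (b, k); (d, k)]) Hc.
    by rewrite /= perm_cons (perm_catC [:: _; _] [:: _; _]).
Qed.
End T.

Lemma enc_lt (x y : nat) : x < y -> y < 3 -> x + y - 1 < 3.
Proof. lia. Qed.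
Lemma enc_inj (x y x' y' : nat) : x < y -> y < 3 -> x' < y' -> y' < 3 ->
  x + y - 1 = x' + y' - 1 -> x = x' /\ y = y'.
Proof. lia. Qed.

Lemma C4_bound3 m (E : {set cell m 3}) : ~~ has_C4 E -> #|E| <= m + 3.
Proof.
move=> HE.
set X1 := [set c in E | [forall a : 'I_3, (a < c.2) ==> ((c.1, a) \notin E)]].
have inX1 : forall c, (c \in X1) = (c \in E) && [forall a : 'I_3, (a < c.2) ==> ((c.1, a) \notin E)].
  by move=> c; rewrite inE.
clearbody X1.
have cE : #|E| = #|E :&: X1| + #|E :\: X1| by rewrite cardsID.
have H1 : #|E :&: X1| <= m.
  rewrite -(card_in_imset (f := fst)); first by apply: leq_trans (max_card _) _; rewrite card_ord.
  move=> [r j] [r' j']; rewrite !inE !inX1 /= => /andP [_ /andP [Hj /forallP Cj]]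
     /andP [_ /andP [Hj' /forallP Cj']] Hrr; subst r'.
  case: (ltngtP j j') => [lt|lt|/val_inj -> //].
    by move: (Cj' j); rewrite lt Hj.
  by move: (Cj j'); rewrite lt Hj'.
have H2 : #|E :\: X1| <= 3.
  pose a (c : cell m 3) : 'I_3 := odflt c.2 [pick a : 'I_3 | (a < c.2) && ((c.1, a) \in E)].
  have aP : forall c, c \in E :\: X1 -> (a c < c.2) && ((c.1, a c) \in E).
    move=> c; rewrite !inE inX1 => /andP [Hn Hc]; move: Hn; rewrite Hc /= negb_forall.
    case/existsP => b; rewrite negb_imply negbK => Hb.
    rewrite /a; case: pickP => [b' -> //|Hn]; by move: (Hn b); rewrite Hb.
  pose g (c : cell m 3) : 'I_3 := inord (a c + c.2 - 1).
  rewrite -(card_in_imset (f := g)); first by apply: leq_trans (max_card _) _; rewrite card_ord.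
  move=> c c' Hc Hc' Hg.
  case/andP: (aP c Hc) => Ha HaE; case/andP: (aP c' Hc') => Ha' HaE'.
  have Hcc : (a c = a c') /\ (c.2 = c'.2).
    move: Hg; rewrite /g => /(congr1 val) /=; rewrite !inordK; last 2 first.
    1,2: by apply: enc_lt.
    move=> Heq; case: (enc_inj Ha (ltn_ord _) Ha' (ltn_ord _) Heq) => Hx Hy.
    by split; apply: val_inj.
  case: Hcc => Eac E2.
  move: c c' Hc Hc' Hg Ha HaE Ha' HaE' Eac E2 => [r j] [r' j'] Hc Hc' _ /= Ha HaE Ha' HaE' Eac E2.
  subst j'; rewrite Eac in Ha HaE.
  case: (eqVneq r r') => [-> //|Hne]; exfalso; move/negP: HE; apply.
  move: Hc Hc'; rewrite !inE => /andP [_ Hc] /andP [_ Hc'].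
  apply/existsP; exists r; apply/existsP; exists r'; apply/existsP; exists (a (r', j));
  apply/existsP; exists j; rewrite Hne HaE HaE' Hc Hc' /= !andbT.
  by rewrite neq_ltn Ha.
by rewrite cE; apply: leq_add.
Qed.

Lemma third_nat (a b : nat) : a != b -> a < 3 -> b < 3 -> (3 - a - b != a) && (3 - a - b != b).
Proof. move=> /eqP H Ha Hb; apply/andP; split; apply/eqP; lia. Qed.

Lemma third_nat2 (a b : nat) : a != b -> 3 - a - b < 3.
Proof. move=> /eqP H; lia. Qed.

Lemma third (i p : 'I_3) : i != p -> exists k : 'I_3, (k != i) && (k != p).
Proof.
move=> H; exists (inord (3 - i - p)); rewrite -!val_eqE /= inordK.
  by apply: third_nat; rewrite ?val_eqE.
by apply: third_nat2.
Qed.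

Lemma z2_33_le : z2 3 3 <= 6.
Proof.
apply/bigmax_leqP => [[E1 E2]] /= /and3P [Hwf Hs Hg].
have HO := occ_card Hwf Hs.
set O := [set c | occupied E1 E2 c] in HO.
have inO : forall c, (c \in O) = occupied E1 E2 c by move=> c; rewrite inE.
clearbody O.
have O9 : #|O| + #|~: O| = 9 by rewrite cardsC card_prod card_ord.
case: (set_0Vmem E2) => [E20|[e He]].
  rewrite E20 cards0 addn0; apply: (@C4_bound3 3).
  by move: Hg; rewrite /has_gen_C4 => /norP [].
rewrite leqNgt; apply/negP => Hbig.
have E2pos : 0 < #|E2| by apply/card_gt0P; exists e.
have CO : #|~: O| <= 1 by move: HO O9 Hbig E2pos; move: #|E1| #|E2| #|O| #|~: O|; lia.
move/forall_inP: Hwf => /(_ e He).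
move: Hg; rewrite /has_gen_C4 => /norP [_ /norP [H2 H3]].
case: e He => [[i j] [p q]] He /= /andP [Hip Hjq].
have [x [Hx Hxs]] : exists x, x \notin O /\ (x = (i, q) \/ x = (p, j)).
  case: (boolP ((i, q) \in O)) => Hiq.
    case: (boolP ((p, j) \in O)) => Hpj.
      by exfalso; move/negP: H2; apply; apply/existsP; exists ((i,j),(p,q)); rewrite He -!inO Hiq Hpj.
    by exists (p, j); split => //; right.
  by exists (i, q); split => //; left.
have Hmiss : forall y, y != x -> y \in O.
  move=> y Hyx; apply/negPn/negP => Hy.
  move/card_le1_eqP: CO => /(_ y x); rewrite !inE Hy Hx => /(_ isT isT) Hyx'.
  by move: Hyx; rewrite Hyx' eqxx.
case: (third Hip) => k /andP [Hki Hkp].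
case: (third Hjq) => l /andP [Hlj Hlq].
move/negP: H3; apply; apply/existsP; exists ((i,j),(p,q)); rewrite He /=.
apply/existsP; exists (k, l).
have Hneq : all (fun y => (y != (i, q)) && (y != (p, j)))
    [:: (k, l); (k, j); (k, q); (i, l); (p, l)].
  rewrite /= !xpair_eqE (negbTE Hki) (negbTE Hkp) (negbTE Hlj) (negbTE Hlq) /=.
  by rewrite !andbF.
apply/andP; split.
  rewrite /= !inE !xpair_eqE (negbTE Hki) (negbTE Hkp) (negbTE Hlj) (negbTE Hlq).
  by rewrite !eqxx (negbTE Hip) (negbTE Hjq).
suff Hall : all (occupied E1 E2) [:: (k,l);(k,j);(k,q);(i,l);(p,l)] by exact Hall.
apply/allP => y Hy; rewrite -inO; apply: Hmiss.
case/andP: (allP Hneq y Hy) => H1 H2'; case: Hxs => ->; by [].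
Qed.

Definition q4 (k : nat) (H : k < 4) : 'I_4 := Ordinal H.
Definition q3 (k : nat) (H : k < 3) : 'I_3 := Ordinal H.

Lemma ord4P (i : 'I_4) : [\/ i = q4 (isT : 0 < 4), i = q4 (isT : 1 < 4), i = q4 (isT : 2 < 4) | i = q4 (isT : 3 < 4)].
Proof.
case: i => [[|[|[|[|i]]]] Hi]; [apply: Or41|apply: Or42|apply: Or43|apply: Or44|by []];
  exact: val_inj.
Qed.
Lemma ord3P (i : 'I_3) : [\/ i = q3 (isT : 0 < 3), i = q3 (isT : 1 < 3) | i = q3 (isT : 2 < 3)].
Proof.
case: i => [[|[|[|i]]] Hi]; [apply: Or31|apply: Or32|apply: Or33|by []]; exact: val_inj.
Qed.

Definition cc (i j : nat) (Hi : i < 4) (Hj : j < 3) : cell 4 3 := (q4 Hi, q3 Hj).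
Notation CC i j := (@cc i j isT isT).

Definition Ex1 : {set cell 4 3} :=
  CC 0 1 |: (CC 0 2 |: (CC 1 2 |: (CC 2 0 |: (CC 2 1 |: (CC 3 0 |: [set CC 3 2]))))).
Definition ex2 : twoedge 4 3 := ((CC 0 0), (CC 1 1)).
Definition Ex2 : {set twoedge 4 3} := [set ex2].

Lemma inEx1 c : (c \in Ex1) =
  [|| c == (CC 0 1), c == (CC 0 2), c == (CC 1 2), c == (CC 2 0), c == (CC 2 1), c == (CC 3 0) | c == (CC 3 2)].
Proof. by rewrite /Ex1 !inE. Qed.

Lemma occ1 m n (E1 : {set cell m n}) (e0 : twoedge m n) c :
  occupied E1 [set e0] c = [|| c \in E1, e0.1 == c | e0.2 == c].
Proof.
rewrite /occupied; congr orb; apply/existsP/idP => [[e]|H].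
  by rewrite inE => /andP [/eqP ->].
by exists e0; rewrite inE eqxx.
Qed.

Lemma occEx c : occupied Ex1 Ex2 c = [|| c \in Ex1, ex2.1 == c | ex2.2 == c].
Proof. exact: occ1. Qed.

Lemma Ex1_card : #|Ex1| = 7.
Proof. by rewrite /Ex1 !cardsU1 cards1 !inE. Qed.

Lemma Ex_adm : admissible Ex1 Ex2.
Proof.
apply/and3P; split.
- by apply/forall_inP => e; rewrite inE => /eqP ->.
- apply/andP; split; apply/forall_inP => e; rewrite inE => /eqP ->.
    by apply/forall_inP => e'; rewrite inE => /eqP ->; rewrite eqxx.
  by rewrite !inEx1.
- apply/or3P => -[].
  + move=> /existsP [i] /existsP [k] /existsP [j] /existsP [l]; rewrite !inEx1.
    by case: (ord4P i) => ->; case: (ord4P k) => ->; case: (ord3P j) => ->; case: (ord3P l) => ->.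
  + by move=> /existsP [e] /andP []; rewrite inE => /eqP ->; rewrite !occEx !inEx1.
  + move=> /existsP [e] /andP []; rewrite inE => /eqP -> /existsP [[k l]].
    rewrite /ex2 /= !occEx.
    by case: (ord4P k) => ->; case: (ord3P l) => ->; rewrite !inEx1.
Qed.

Lemma z2_tr m n : z2 m n <= z2 n m.
Proof.
apply/bigmax_leqP => [[E1 E2]] /= H.
have := leq_bigmax_cond (F := fun G : {set cell n m} * {set twoedge n m} => #|G.1| + #|G.2|)
   (P := fun G => admissible G.1 G.2) (tc @: E1, te @: E2) (adm_transpose H).
by rewrite /= !card_imset //; [apply: te_inj | apply: tc_inj].
Qed.

Lemma nat4 (a b c d : nat) : a != b -> c != d -> a != c -> a != d -> b != c -> b != d ->
  a < 3 -> b < 3 -> c < 3 -> d < 3 -> False.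
Proof. move=> /eqP ? /eqP ? /eqP ? /eqP ? /eqP ? /eqP ? ? ? ? ?; lia. Qed.

Lemma z2_33_ge : 6 <= z2 3 3.
Proof.
pose D : {set cell 3 3} := [set (r, r) | r : 'I_3].
have cD : #|D| = 3 by rewrite card_imset ?card_ord // => r r' [].
have inD0 : forall c, (c \in D) = (c.1 == c.2).
  move=> [i j] /=; apply/imsetP/eqP => [[r _ [-> ->]] //|->]; by exists j.
have inD : forall c, (c \in ~: D) = (c.1 != c.2) by move=> c; rewrite inE inD0.
have cC : #|~: D| = 6.
  have := cardsC D; rewrite cD card_prod card_ord; move: #|~: D| => x; lia.
rewrite -cC; apply: z2_ge_z; apply/negP => /existsP [i] /existsP [k] /existsP [j] /existsP [l].
move=> /and3P [Hik Hjl /and4P [H1 H2 H3 H4]]; move: H1 H2 H3 H4; rewrite !inE !inD0 /= => H1 H2 H3 H4.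
exact: (nat4 Hik Hjl H1 H2 H3 H4 (ltn_ord i) (ltn_ord k) (ltn_ord j) (ltn_ord l)).
Qed.

Theorem theorem2p3 :
  (forall m : nat, 2 <= m -> z2 m 2 = m + 1) /\
  (forall n : nat, 2 <= n -> z2 2 n = n + 1) /\
  z2 3 3 = 6 /\
  8 <= z2 4 3 /\ z 4 3 < 8.
Proof.
have H2 : forall m, 2 <= m -> z2 m 2 = m + 1.
  move=> m Hm; apply/eqP; rewrite eqn_leq z2_m2_le z2_m2_ge //.
  by apply: leq_trans Hm.
split; first exact: H2.
split.
  move=> n Hn; rewrite -(H2 n Hn); apply/eqP; rewrite eqn_leq !z2_tr //.
split; first by apply/eqP; rewrite eqn_leq z2_33_le z2_33_ge.
split.
  have := leq_bigmax_cond (F := fun G : {set cell 4 3} * {set twoedge 4 3} => #|G.1| + #|G.2|)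
     (P := fun G => admissible G.1 G.2) (Ex1, Ex2) Ex_adm.
  by rewrite /= Ex1_card /Ex2 cards1.
rewrite ltnS; apply/bigmax_leqP => E HE.
exact: (@C4_bound3 4).
Qed.
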